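(* Let $X_1,X_2,X_3,X_4$ be random vectors in a sublinear expectation space. The following are equivalent: (1) $X_1\dashrightarrow X_2\dashrightarrow X_3\dashrightarrow X_4$; (2) $(X_1,X_2)\dashrightarrow(X_3,X_4)$, $X_1\dashrightarrow X_2$ and $X_3\dashrightarrow X_4$.
   Context: Sublinear expectation space $(\Omega,\mathcal H,\hat{\mathbb E})$: $\hat{\mathbb E}$ is monotone, constant-preserving, sub-additive and positively homogeneous (in the paper $\hat{\mathbb E}[X]=\sup_{Q\in\mathcal P}E_Q[X]$). For random vectors $X,Y$, $X\dashrightarrow Y$ means $\hat{\mathbb E}[\varphi(X,Y)]=\hat{\mathbb E}[\hat{\mathbb E}[\varphi(x,Y)]_{x=X}]$ for all bounded Lipschitz $\varphi$; $X_1\dashrightarrow\cdots\dashrightarrow X_n$ means $(X_1,\dots,X_i)\dashrightarrow X_{i+1}$ for $i=1,\dots,n-1$. *)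

(* Defs.v *)
From HB Require Import structures.
From mathcomp Require Import all_boot all_order all_algebra.
From mathcomp Require Import reals.
Set Implicit Arguments. Unset Strict Implicit. Unset Printing Implicit Defensive.
Import Order.TTheory GRing.Theory Num.Theory.
Local Open Scope ring_scope.

Definition vnorm (R : realType) (d : nat) (v : 'rV[R]_d) : R :=
  \sum_(i < d) `|v ord0 i|.

Definition bounded_lipschitz (R : realType) (d : nat) (phi : 'rV[R]_d -> R) : Prop :=
  (exists M : R, forall x, `|phi x| <= M) /\
  (exists L : R, forall x y, `|phi x - phi y| <= L * vnorm (x - y)).

(* E is given as a total map on
   Omega -> R, its axioms only concern elements of H. *)
Record sublinear_space (R : realType) (Omega : Type) := SublinearSpace {
  sH : (Omega -> R) -> Prop;
  sE : (Omega -> R) -> R;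
  sH_cst : forall c : R, sH (fun _ => c);
  sH_add : forall X Y, sH X -> sH Y -> sH (fun w => X w + Y w);
  sH_scale : forall (a : R) X, sH X -> sH (fun w => a * X w);
  sH_comp : forall (d : nat) (X : Omega -> 'rV[R]_d) (phi : 'rV[R]_d -> R),
      (forall i : 'I_d, sH (fun w => X w ord0 i)) ->
      bounded_lipschitz phi -> sH (fun w => phi (X w));
  sE_mono : forall X Y, sH X -> sH Y -> (forall w, X w <= Y w) -> sE X <= sE Y;
  sE_cst : forall c : R, sE (fun _ => c) = c;
  sE_subadd : forall X Y, sH X -> sH Y -> sE (fun w => X w + Y w) <= sE X + sE Y;
  sE_poshom : forall (a : R) X, sH X -> 0 <= a -> sE (fun w => a * X w) = a * sE X
}.

Definition random_vector (R : realType) (Omega : Type) (S : sublinear_space R Omega)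
  (d : nat) (X : Omega -> 'rV[R]_d) : Prop :=
  forall i : 'I_d, sH S (fun w => X w ord0 i).

Definition rvpair (R : realType) (Omega : Type) (d1 d2 : nat)
  (X : Omega -> 'rV[R]_d1) (Y : Omega -> 'rV[R]_d2) : Omega -> 'rV[R]_(d1 + d2) :=
  fun w => row_mx (X w) (Y w).

Definition indep (R : realType) (Omega : Type) (S : sublinear_space R Omega)
  (d1 d2 : nat) (X : Omega -> 'rV[R]_d1) (Y : Omega -> 'rV[R]_d2) : Prop :=
  forall phi : 'rV[R]_(d1 + d2) -> R, bounded_lipschitz phi ->
    sE S (fun w => phi (row_mx (X w) (Y w))) =
    sE S (fun w => sE S (fun w' => phi (row_mx (X w) (Y w')))).

Definition indep_chain4 (R : realType) (Omega : Type) (S : sublinear_space R Omega)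
  (d1 d2 d3 d4 : nat) (X1 : Omega -> 'rV[R]_d1) (X2 : Omega -> 'rV[R]_d2)
  (X3 : Omega -> 'rV[R]_d3) (X4 : Omega -> 'rV[R]_d4) : Prop :=
  [/\ indep S X1 X2,
      indep S (rvpair X1 X2) X3 &
      indep S (rvpair (rvpair X1 X2) X3) X4].

(* Main.v *)
Require Import Defs.
From mathcomp Require Import all_boot all_order all_algebra.
From mathcomp Require Import reals.
From mathcomp Require Import lra.
From Stdlib Require Import FunctionalExtensionality.
Import Order.TTheory GRing.Theory Num.Theory.

Local Open Scope ring_scope.
Set Implicit Arguments. Unset Strict Implicit.

Ltac fe := apply: functional_extensionality => ?.

Section Aux.
Variable R : realType.

Lemma vnorm_ge0 d (v : 'rV[R]_d) : 0 <= vnorm v.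
Proof. rewrite /vnorm; apply: sumr_ge0 => i _; exact: normr_ge0. Qed.

Lemma vnorm_row_mx d1 d2 (a : 'rV[R]_d1) (b : 'rV[R]_d2) :
  vnorm (row_mx a b) = vnorm a + vnorm b.
Proof.
rewrite /vnorm big_split_ord /=.
by congr (_ + _); apply: eq_bigr => i _; rewrite ?row_mxEl ?row_mxEr.
Qed.

Definition lip {d e : nat} (f : 'rV[R]_d -> 'rV[R]_e) :=
  exists2 C : R, 0 <= C & (forall x y, vnorm (f x - f y) <= C * vnorm (x - y)).

Lemma lip_id d : lip (fun x : 'rV[R]_d => x).
Proof. by exists 1 => // x y; rewrite mul1r. Qed.

Lemma lip_cst d e (c : 'rV[R]_e) : lip (fun _ : 'rV[R]_d => c).
Proof.
exists 0 => // x y; rewrite subrr mul0r /vnorm big1 // => i _.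
by rewrite mxE normr0.
Qed.

Lemma lip_row d e1 e2 (f : 'rV[R]_d -> 'rV[R]_e1) (g : 'rV[R]_d -> 'rV[R]_e2) :
  lip f -> lip g -> lip (fun x => row_mx (f x) (g x)).
Proof.
move=> [C1 C1p H1] [C2 C2p H2]; exists (C1 + C2); first exact: addr_ge0.
move=> x y; rewrite opp_row_mx add_row_mx vnorm_row_mx mulrDl.
exact: lerD.
Qed.

Lemma lip_comp d e k (f : 'rV[R]_e -> 'rV[R]_k) (g : 'rV[R]_d -> 'rV[R]_e) :
  lip f -> lip g -> lip (fun x => f (g x)).
Proof.
move=> [C1 C1p H1] [C2 C2p H2]; exists (C1 * C2); first exact: mulr_ge0.
move=> x y; apply: le_trans (H1 _ _) _; rewrite -mulrA; exact: ler_wpM2l.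
Qed.

Lemma lip_lsub d1 d2 : lip (fun z : 'rV[R]_(d1 + d2) => lsubmx z).
Proof.
exists 1 => // x y; rewrite mul1r.
have -> : lsubmx x - lsubmx y = lsubmx (x - y) by apply/matrixP => i j; rewrite !mxE.
by rewrite -{2}(hsubmxK (x - y)) vnorm_row_mx lerDl vnorm_ge0.
Qed.

Lemma lip_rsub d1 d2 : lip (fun z : 'rV[R]_(d1 + d2) => rsubmx z).
Proof.
exists 1 => // x y; rewrite mul1r.
have -> : rsubmx x - rsubmx y = rsubmx (x - y) by apply/matrixP => i j; rewrite !mxE.
by rewrite -{2}(hsubmxK (x - y)) vnorm_row_mx lerDr vnorm_ge0.
Qed.

Lemma bl_comp d e (phi : 'rV[R]_e -> R) (f : 'rV[R]_d -> 'rV[R]_e) :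
  bounded_lipschitz phi -> lip f -> bounded_lipschitz (fun x => phi (f x)).
Proof.
move=> [[M HM] [L HL]] [C Cp HC]; split; first by exists M.
exists (Num.max L 0 * C) => x y.
apply: le_trans (HL _ _) _.
have h1 : L * vnorm (f x - f y) <= Num.max L 0 * vnorm (f x - f y).
  by apply: ler_wpM2r; [exact: vnorm_ge0 | rewrite le_max lexx].
apply: le_trans h1 _; rewrite -mulrA; apply: ler_wpM2l => //.
by rewrite le_max lexx orbT.
Qed.

Lemma bl_sec d1 d2 (phi : 'rV[R]_(d1 + d2) -> R) (a : 'rV[R]_d1) :
  bounded_lipschitz phi -> bounded_lipschitz (fun z => phi (row_mx a z)).
Proof.
move=> h; apply: (bl_comp h); apply: lip_row; [exact: lip_cst | exact: lip_id].
Qed.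

Lemma psi_bl Omega (S : sublinear_space R Omega) d1 d2 (Y : Omega -> 'rV[R]_d2)
  (phi : 'rV[R]_(d1 + d2) -> R) :
  random_vector S Y -> bounded_lipschitz phi ->
  bounded_lipschitz (fun x => sE S (fun w => phi (row_mx x (Y w)))).
Proof.
move=> hY hphi.
have hH : forall x, sH S (fun w => phi (row_mx x (Y w))).
  by move=> x; exact: (sH_comp (phi := fun z => phi (row_mx x z)) hY (bl_sec x hphi)).
case: hphi => [[M HM] [L HL]]; split.
  exists M => x; rewrite ler_norml; apply/andP; split.
    rewrite -[X in X <= _](sE_cst S (- M)); apply: sE_mono => //; first exact: sH_cst.
    by move=> w; have := HM (row_mx x (Y w)); rewrite ler_norml => /andP[].
  rewrite -[X in _ <= X](sE_cst S M); apply: sE_mono => //; first exact: sH_cst.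
  by move=> w; have := HM (row_mx x (Y w)); rewrite ler_norml => /andP[].
exists L => x y.
set c := L * vnorm (x - y).
have key : forall w, `|phi (row_mx x (Y w)) - phi (row_mx y (Y w))| <= c.
  move=> w; apply: le_trans (HL _ _) _.
  by rewrite opp_row_mx add_row_mx vnorm_row_mx subrr [vnorm 0]/vnorm big1 ?addr0 // => i _; rewrite mxE normr0.
have up : forall a b : 'rV[R]_d1, (forall w, phi (row_mx a (Y w)) <= phi (row_mx b (Y w)) + c) ->
   sE S (fun w => phi (row_mx a (Y w))) <= sE S (fun w => phi (row_mx b (Y w))) + c.
  move=> a b hab.
  apply: le_trans (_ : sE S (fun w => phi (row_mx b (Y w)) + c) <= _).
    apply: sE_mono => //; apply: sH_add => //; exact: sH_cst.
  apply: le_trans (sE_subadd _ _) _ => //; first exact: sH_cst.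
  by rewrite sE_cst.
rewrite ler_norml; apply/andP; split.
  suff : sE S (fun w => phi (row_mx y (Y w))) <= sE S (fun w => phi (row_mx x (Y w))) + c by lra.
  apply: up => w; have := key w; rewrite ler_norml => /andP[]; lra.
suff : sE S (fun w => phi (row_mx x (Y w))) <= sE S (fun w => phi (row_mx y (Y w))) + c by lra.
apply: up => w; have := key w; rewrite ler_norml => /andP[]; lra.
Qed.

End Aux.

Section Indep.
Variables (R : realType) (Omega : Type) (S : sublinear_space R Omega).
Variables (d d3 d4 : nat) (X12 : Omega -> 'rV[R]_d) (X3 : Omega -> 'rV[R]_d3)
  (X4 : Omega -> 'rV[R]_d4).

Lemma indA : indep S (rvpair X12 X3) X4 -> indep S X3 X4.
Proof.
move=> h phi hphi.
pose phi' := fun z : 'rV[R]_((d + d3) + d4) =>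
  phi (row_mx (rsubmx (lsubmx z)) (rsubmx z)).
have hb : bounded_lipschitz phi'.
  apply: (bl_comp hphi); apply: lip_row; last exact: lip_rsub.
  exact: (lip_comp (@lip_rsub _ _ _) (@lip_lsub _ _ _)).
transitivity (sE S (fun w => phi' (row_mx (rvpair X12 X3 w) (X4 w)))).
  by congr (sE S _); fe; rewrite /phi' /rvpair row_mxKl !row_mxKr.
rewrite (h phi' hb); congr (sE S _); fe; congr (sE S _); fe.
by rewrite /phi' /rvpair row_mxKl !row_mxKr.
Qed.

Lemma indB : random_vector S X4 -> indep S (rvpair X12 X3) X4 -> indep S X12 X3 ->
  indep S X3 X4 -> indep S X12 (rvpair X3 X4).
Proof.
move=> hX4 h123 h12 h34 phi hphi.
pose phi' := fun z : 'rV[R]_((d + d3) + d4) =>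
  phi (row_mx (lsubmx (lsubmx z)) (row_mx (rsubmx (lsubmx z)) (rsubmx z))).
have hb : bounded_lipschitz phi'.
  apply: (bl_comp hphi); apply: lip_row.
    exact: (lip_comp (@lip_lsub _ _ _) (@lip_lsub _ _ _)).
  apply: lip_row; last exact: lip_rsub.
  exact: (lip_comp (@lip_rsub _ _ _) (@lip_lsub _ _ _)).
pose chi := fun z : 'rV[R]_(d + d3) => sE S (fun w' => phi' (row_mx z (X4 w'))).
have hc : bounded_lipschitz chi by exact: psi_bl.
transitivity (sE S (fun w => phi' (row_mx (rvpair X12 X3 w) (X4 w)))).
  by congr (sE S _); fe; rewrite /phi' /rvpair ?row_mxKl ?row_mxKr ?row_mxKl ?row_mxKr ?row_mxKl.
rewrite (h123 phi' hb).
transitivity (sE S (fun w => chi (row_mx (X12 w) (X3 w)))) => //.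
rewrite (h12 chi hc); congr (sE S _); apply: functional_extensionality => w.
transitivity (sE S (fun w'' => sE S (fun w' =>
   (fun z => phi (row_mx (X12 w) z)) (row_mx (X3 w'') (X4 w'))))).
  congr (sE S _); fe; rewrite /chi; congr (sE S _); fe.
  by rewrite /phi' ?row_mxKl ?row_mxKr ?row_mxKl ?row_mxKr ?row_mxKl.
symmetry; exact: (h34 _ (bl_sec _ hphi)).
Qed.

Lemma indC : indep S X12 (rvpair X3 X4) -> indep S X12 X3.
Proof.
move=> h phi hphi.
pose phi' := fun z : 'rV[R]_(d + (d3 + d4)) =>
  phi (row_mx (lsubmx z) (lsubmx (rsubmx z))).
have hb : bounded_lipschitz phi'.
  apply: (bl_comp hphi); apply: lip_row; first exact: lip_lsub.
  exact: (lip_comp (@lip_lsub _ _ _) (@lip_rsub _ _ _)).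
transitivity (sE S (fun w => phi' (row_mx (X12 w) (rvpair X3 X4 w)))).
  by congr (sE S _); fe; rewrite /phi' /rvpair ?row_mxKl ?row_mxKr ?row_mxKl ?row_mxKr ?row_mxKl.
rewrite (h phi' hb); congr (sE S _); fe; congr (sE S _); fe.
by rewrite /phi' /rvpair ?row_mxKl ?row_mxKr ?row_mxKl ?row_mxKr ?row_mxKl.
Qed.

Lemma indD : random_vector S X4 -> indep S X12 (rvpair X3 X4) -> indep S X3 X4 ->
  indep S X12 X3 -> indep S (rvpair X12 X3) X4.
Proof.
move=> hX4 h h34 h12 phi hphi.
pose phi' := fun z : 'rV[R]_(d + (d3 + d4)) =>
  phi (row_mx (row_mx (lsubmx z) (lsubmx (rsubmx z))) (rsubmx (rsubmx z))).
have hb : bounded_lipschitz phi'.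
  apply: (bl_comp hphi); apply: lip_row.
    apply: lip_row; first exact: lip_lsub.
    exact: (lip_comp (@lip_lsub _ _ _) (@lip_rsub _ _ _)).
  exact: (lip_comp (@lip_rsub _ _ _) (@lip_rsub _ _ _)).
pose chi := fun z : 'rV[R]_(d + d3) => sE S (fun w'' => phi (row_mx z (X4 w''))).
have hc : bounded_lipschitz chi by exact: psi_bl.
transitivity (sE S (fun w => phi' (row_mx (X12 w) (rvpair X3 X4 w)))).
  by congr (sE S _); fe; rewrite /phi' /rvpair ?row_mxKl ?row_mxKr ?row_mxKl ?row_mxKr ?row_mxKl.
rewrite (h phi' hb).
transitivity (sE S (fun w => sE S (fun w' => chi (row_mx (X12 w) (X3 w'))))).
  congr (sE S _); apply: functional_extensionality => w.
  rewrite (h34 (fun z => phi' (row_mx (X12 w) z)) (bl_sec _ hb)).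
  congr (sE S _); fe; rewrite /chi; congr (sE S _); fe.
  by rewrite /phi' ?row_mxKl ?row_mxKr ?row_mxKl ?row_mxKr ?row_mxKl.
by rewrite -(h12 chi hc).
Qed.

End Indep.

Unset Implicit Arguments.

Theorem mainTheorem19 (R : realType) (Omega : Type) (S : sublinear_space R Omega)
  (d1 d2 d3 d4 : nat) (X1 : Omega -> 'rV[R]_d1) (X2 : Omega -> 'rV[R]_d2)
  (X3 : Omega -> 'rV[R]_d3) (X4 : Omega -> 'rV[R]_d4) :
  random_vector S X1 -> random_vector S X2 ->
  random_vector S X3 -> random_vector S X4 ->
  (indep_chain4 S X1 X2 X3 X4 <->
   [/\ indep S (rvpair X1 X2) (rvpair X3 X4), indep S X1 X2 & indep S X3 X4]).
Proof.
move=> _ _ _ hX4; split.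
  case=> h12 h123 h1234.
  have h34 := indA h1234.
  by split => //; exact: indB.
case=> h h12 h34.
have h123 := indC h.
split => //; exact: indD.
Qed.
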